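(* Let $P^G=\{p^G(o_1o_2o_3|i_1i_2i_3)\}$ be the tripartite correlation defined in the context. Then there exist a finite set $\Lambda$, a probability distribution $(p_\lambda)_{\lambda\in\Lambda}$, single-party conditional distributions $p(o_1|i_1,\lambda)$, and bipartite conditional distributions $p_{2\leftarrow3}(o_2o_3|i_2i_3,\lambda)$ satisfying, for every $\lambda$, every $i_3,o_3$ and every $i_2,i_2'$, $$\sum_{o_2}p_{2\leftarrow3}(o_2o_3|i_2i_3,\lambda)=\sum_{o_2}p_{2\leftarrow3}(o_2o_3|i_2'i_3,\lambda)$$ (i.e. no signaling from party 2 to party 3; signaling from 3 to 2 is allowed), such that $$p^G(o_1o_2o_3|i_1i_2i_3)=\sum_{\lambda\in\Lambda}p_\lambda\, p(o_1|i_1,\lambda)\,p_{2\leftarrow3}(o_2o_3|i_2i_3,\lambda)$$ for all inputs and outputs. In particular, $P^G$ admits a bilocal decomposition with respect to the partition $1|23$ in which no term displays signaling in both directions.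
   Context: Three parties; party $k\in\{1,2,3\}$ has input $i_k\in\{0,1\}$ and output $o_k\in\{0,1\}$. A tripartite correlation is a family of conditional probability distributions $p(o_1o_2o_3|i_1i_2i_3)$. Let $a^{\pm}=\frac14\left(1\pm\frac{1}{\sqrt2}\right)$. The correlation $P^G$ is given by the following matrix, whose rows are indexed by $(i_1i_2i_3)$ and columns by $(o_1o_2o_3)$, both in lexicographic order $000,001,010,011,100,101,110,111$: $$P^G=\frac12\begin{pmatrix} 2a^+&2a^-&0&0&0&0&2a^-&2a^+\\ 2a^+&2a^-&0&0&0&0&2a^-&2a^+\\ a^+&a^-&a^+&a^-&a^-&a^+&a^-&a^+\\ a^+&a^-&a^+&a^-&a^-&a^+&a^-&a^+\\ a^+&a^-&a^-&a^+&a^+&a^-&a^-&a^+\\ a^+&a^-&a^-&a^+&a^+&a^-&a^-&a^+\\ a^+&a^-&a^-&a^+&a^-&a^+&a^+&a^-\\ a^-&a^+&a^+&a^-&a^+&a^-&a^-&a^+ \end{pmatrix}.$$ (It is the quantum correlation obtained from the state $\frac{1}{\sqrt2}(|000\rangle+|111\rangle)$ when parties 1 and 2 measure $\sigma_z$ on input 0 and $\sigma_x$ on input 1, party 3 measures $(\sigma_z+\sigma_x)/\sqrt2$ on input 0 and $(\sigma_z-\sigma_x)/\sqrt2$ on input 1, and outcome $+1$ is recorded as 0, $-1$ as 1.) *)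

(* Defs.v *)
(* Inputs/outputs in {0,1} are encoded as bool (false = 0, true = 1). *)
From mathcomp Require Import all_boot all_order all_algebra.
From mathcomp Require Import reals.
Set Implicit Arguments. Unset Strict Implicit. Unset Printing Implicit Defensive.
Import Order.TTheory GRing.Theory Num.Theory.
Local Open Scope ring_scope.

Definition b2n (b : bool) : nat := if b then 1%N else 0%N.

Definition idx3 (x1 x2 x3 : bool) : nat := (4 * b2n x1 + 2 * b2n x2 + b2n x3)%N.

Section PG.
Variable R : realType.

Definition ap : R := (1 + (Num.sqrt 2)^-1) / 4.
Definition am : R := (1 - (Num.sqrt 2)^-1) / 4.

(* The matrix 2 * P^G, rows (i1 i2 i3), columns (o1 o2 o3), lexicographic. *)
Definition PG_rows : seq (seq R) :=
  [:: [:: 2*ap; 2*am; 0; 0; 0; 0; 2*am; 2*ap];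
      [:: 2*ap; 2*am; 0; 0; 0; 0; 2*am; 2*ap];
      [:: ap; am; ap; am; am; ap; am; ap];
      [:: ap; am; ap; am; am; ap; am; ap];
      [:: ap; am; am; ap; ap; am; am; ap];
      [:: ap; am; am; ap; ap; am; am; ap];
      [:: ap; am; am; ap; am; ap; ap; am];
      [:: am; ap; ap; am; ap; am; am; ap] ].

Definition PG (o1 o2 o3 i1 i2 i3 : bool) : R :=
  (nth 0 (nth [::] PG_rows (idx3 i1 i2 i3)) (idx3 o1 o2 o3)) / 2.
End PG.

(* Main.v *)
Require Import Defs.
From mathcomp Require Import all_boot all_order all_algebra.
From mathcomp Require Import reals.
From mathcomp Require Import ring lra.
Import Order.TTheory GRing.Theory Num.Theory.
Local Open Scope ring_scope.

Section Aux.
Variable R : realType.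

Lemma s2nz : Num.sqrt (2 : R) != 0.
Proof. by rewrite sqrtr_eq0 -ltNge ltr0n. Qed.

Lemma am_eq : am R = 1/2 - ap R.
Proof. by rewrite /am /ap; field; rewrite s2nz. Qed.

Lemma ap_ge0 : 0 <= ap R.
Proof.
rewrite /ap; apply: divr_ge0 => //; apply: addr_ge0 => //.
by rewrite invr_ge0 sqrtr_ge0.
Qed.

Lemma am_ge0 : 0 <= am R.
Proof.
rewrite /am; apply: divr_ge0 => //; rewrite subr_ge0.
have h1 : 1 <= Num.sqrt (2 : R).
  by rewrite -[X in X <= _]sqrtr1; apply: ler_wsqrtr; rewrite ler1n.
have h0 : 0 < Num.sqrt (2 : R) by apply: lt_le_trans h1.
by rewrite invf_le1.
Qed.

Definition a0 (l : 'I_4) : bool := odd l.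
Definition a1 (l : 'I_4) : bool := (1 < l)%N.
Definition P3 (o3 a : bool) : R := if o3 == a then 2 * ap R else 2 * am R.
Definition Q (o2 o3 i2 i3 : bool) (l : 'I_4) : R :=
  if i2 then (if o2 == a1 l (+) o3 (+) i3 then 2 * ap R else 2 * am R)
  else (if o2 == a0 l then 1 else 0).
Definition p23 (o2 o3 i2 i3 : bool) (l : 'I_4) : R := P3 o3 (a0 l) * Q o2 o3 i2 i3 l.
Definition p1 (o1 i1 : bool) (l : 'I_4) : R :=
  if o1 == (if i1 then a1 l else a0 l) then 1 else 0.

End Aux.

Theorem proposition1 (R : realType) :
  exists (n : nat) (pl : 'I_n -> R)
         (p1 : bool -> bool -> 'I_n -> R)            (* p(o1 | i1, l) *)
         (p23 : bool -> bool -> bool -> bool -> 'I_n -> R), (* p(o2 o3 | i2 i3, l) *)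
    [/\ (forall l, 0 <= pl l) /\ \sum_(l < n) pl l = 1,
        (forall o1 i1 l, 0 <= p1 o1 i1 l) /\
          (forall i1 l, \sum_(o1 : bool) p1 o1 i1 l = 1),
        (forall o2 o3 i2 i3 l, 0 <= p23 o2 o3 i2 i3 l) /\
          (forall i2 i3 l, \sum_(o2 : bool) \sum_(o3 : bool) p23 o2 o3 i2 i3 l = 1),
        (forall l i3 o3 i2 i2',
            \sum_(o2 : bool) p23 o2 o3 i2 i3 l = \sum_(o2 : bool) p23 o2 o3 i2' i3 l)
      & forall o1 o2 o3 i1 i2 i3,
          PG R o1 o2 o3 i1 i2 i3
          = \sum_(l < n) pl l * p1 o1 i1 l * p23 o2 o3 i2 i3 l].
Proof.
have hp := ap_ge0 R; have hm := am_ge0 R.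
exists 4%N, (fun _ => 1/4), (@p1 R), (@p23 R); split.
- split; first by move=> l; rewrite divr_ge0.
  by rewrite !big_ord_recr big_ord0 /=; field.
- split.
  + by move=> o1 i1 l; rewrite /p1; case: ifP.
  + move=> i1 l; rewrite big_bool /p1.
    by case: i1; case: (a0 l); case: (a1 l) => /=; lra.
- split.
  + move=> o2 o3 i2 i3 l; rewrite /p23 /P3 /Q; apply: mulr_ge0.
      by case: ifP => _; lra.
    by case: i2; case: ifP => _ //; lra.
  + move=> i2 i3 l; rewrite !big_bool /p23 /P3 /Q.
    by case: i2; case: i3; case: (a0 l); case: (a1 l) => /=; rewrite am_eq; field.
- move=> l i3 o3 i2 i2'; rewrite !big_bool /p23 /P3 /Q.
  by case: i2; case: i2'; case: i3; case: o3; case: (a0 l); case: (a1 l) => /=;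
    rewrite ?am_eq; field.
- move=> o1 o2 o3 i1 i2 i3; rewrite !big_ord_recr big_ord0 /=.
  rewrite /PG /p1 /p23 /P3 /Q /a0 /a1 /=.
  by case: o1; case: o2; case: o3; case: i1; case: i2; case: i3 => /=;
    rewrite ?am_eq; field; rewrite ?s2nz.
Qed.
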